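(* Consider the directed Poisson process stochastic block model with $n$ individuals, $Q$ groups, parameter $\theta=(\pi,\alpha)$, and observations $\mathcal O=\{(t_m,i_m,j_m): m=1,\dots,M\}$ on $[0,T]$. Let $$\mathcal T=\Big\{\tau=(\tau^{i,q})_{i\le n,q\le Q}:\ \tau^{i,q}\ge0,\ \textstyle\sum_{q=1}^Q\tau^{i,q}=1\ \text{for all } i\Big\},$$ and for $\tau\in\mathcal T$ let $\mathrm{pr}_\tau(\cdot\mid\mathcal O)$ be the factorized distribution on $\mathcal Z=(Z_1,\dots,Z_n)$ given by $\mathrm{pr}_\tau\{\mathcal Z=(q_1,\dots,q_n)\mid\mathcal O\}=\prod_{i=1}^n\tau^{i,q_i}$. Then the solution $\hat\tau$ of $$\hat\tau=\operatorname{Argmin}_{\tau\in\mathcal T}\mathrm{KL}\big(\mathrm{pr}_\tau(\cdot\mid\mathcal O)\,\big\|\,\mathrm{pr}_\theta(\cdot\mid\mathcal O)\big)$$ satisfies the fixed point equation $$\hat\tau^{i,q}=\frac{\pi_q\exp\{D_{iq}(\hat\tau,\alpha)\}}{\sum_{q'=1}^Q\pi_{q'}\exp\{D_{iq'}(\hat\tau,\alpha)\}},\qquad (i=1,\dots,n;\ q=1,\dots,Q),$$ where $$D_{iq}(\tau,\alpha)=-\sum_{l=1}^Q\sum_{j\ne i}\tau^{j,l}\{A^{(q,l)}(T)+A^{(l,q)}(T)\}+\sum_{l=1}^Q\sum_{m=1}^M\Big[\mathbf 1_{\{i_m=i\}}\tau^{j_m,l}\log\{\alpha^{(q,l)}(t_m)\}+\mathbf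 1_{\{j_m=i\}}\tau^{i_m,l}\log\{\alpha^{(l,q)}(t_m)\}\Big].$$
   Context: Directed Poisson process stochastic block model: $n$ individuals, dyads $\mathcal R=\{(i,j): i\ne j\}$. Latent $Z_1,\dots,Z_n$ i.i.d. in $\{1,\dots,Q\}$ with $\mathrm{pr}(Z_1=q)=\pi_q>0$. Conditionally on the $Z_i$'s, the counting processes $N_{i,j}$, $(i,j)\in\mathcal R$, on $[0,T]$ are independent inhomogeneous Poisson processes with intensity $\alpha^{(Z_i,Z_j)}$, where the $\alpha^{(q,l)}$ are nonnegative functions with cumulative intensities $A^{(q,l)}(t)=\int_0^t\alpha^{(q,l)}(u)\,du$. The observations are the events $\mathcal O=\{(t_m,i_m,j_m)\}_{m=1}^M$, meaning an interaction from $i_m$ to $j_m$ at time $t_m$, with $0<t_1<\dots<t_M<T$. $\mathrm{pr}_\theta(\cdot\mid\mathcal O)$ is the true conditional distribution of $\mathcal Z$ given $\mathcal O$, derived from the complete-data likelihood $\mathcal L(\mathcal O,\mathcal Z\mid\theta)=\exp\{-\sum_{(i,j)\in\mathcal R}A^{(Z_i,Z_j)}(T)\}\prod_{m=1}^M\alpha^{(Z_{i_m},Z_{j_m})}(t_m)\prod_{i=1}^n\pi_{Z_i}$. $\mathrm{KL}$ denotes Kullback–Leibler divergence and $\mathbf 1_A$ the indicator of $A$. *)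

(* Defs.v *)
From HB Require Import structures.
From mathcomp Require Import all_boot all_order all_algebra.
From mathcomp Require Import all_classical all_reals all_analysis.
Set Implicit Arguments. Unset Strict Implicit. Unset Printing Implicit Defensive.
Import Order.TTheory GRing.Theory Num.Theory.
Local Open Scope classical_set_scope.
Local Open Scope ring_scope.

Section PSBM.
Variables (R : realType) (n Q M : nat).

Definition config := {ffun 'I_n -> 'I_Q}.

Definition cumint (alpha : 'I_Q -> 'I_Q -> R -> R) (T : R) (q l : 'I_Q) : R :=
  Rintegral (@lebesgue_measure R) `[0, T] (alpha q l).

Definition lik (pi : 'I_Q -> R) (alpha : 'I_Q -> 'I_Q -> R -> R) (T : R)
  (t : 'I_M -> R) (src dst : 'I_M -> 'I_n) (z : config) : R :=
  expR (- \sum_(i < n) \sum_(j < n | i != j) cumint alpha T (z i) (z j))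
  * \prod_(m < M) alpha (z (src m)) (z (dst m)) (t m)
  * \prod_(i < n) pi (z i).

Definition post pi alpha T t src dst (z : config) : R :=
  lik pi alpha T t src dst z / \sum_(z' : config) lik pi alpha T t src dst z'.

Definition ptau (tau : 'I_n -> 'I_Q -> R) (z : config) : R :=
  \prod_(i < n) tau i (z i).

Definition KL (p q : config -> R) : R :=
  \sum_(z : config) (if p z == 0 then 0 else p z * ln (p z / q z)).

Definition in_T (tau : 'I_n -> 'I_Q -> R) : Prop :=
  (forall i q, 0 <= tau i q) /\ (forall i, \sum_(q < Q) tau i q = 1).

Definition Dfun (alpha : 'I_Q -> 'I_Q -> R -> R) (T : R)
  (t : 'I_M -> R) (src dst : 'I_M -> 'I_n)
  (tau : 'I_n -> 'I_Q -> R) (i : 'I_n) (q : 'I_Q) : R :=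
  - (\sum_(l < Q) \sum_(j < n | j != i)
        tau j l * (cumint alpha T q l + cumint alpha T l q))
  + \sum_(l < Q) \sum_(m < M)
      ((src m == i)%:R * tau (dst m) l * ln (alpha q l (t m))
       + (dst m == i)%:R * tau (src m) l * ln (alpha l q (t m))).

End PSBM.

(* Main.v *)
Require Import Defs.
From HB Require Import structures.
From mathcomp Require Import all_boot all_order all_algebra.
From mathcomp Require Import all_classical all_reals all_analysis.
From mathcomp Require Import ring lra.
Import Order.TTheory GRing.Theory Num.Theory.
Local Open Scope classical_set_scope.
Local Open Scope ring_scope.
Set Implicit Arguments. Unset Strict Implicit.

Lemma sum_ptau_prod (R : realType) (n Q : nat) (tau phi : 'I_n -> 'I_Q -> R) :
  \sum_(z : config n Q) ptau tau z * \prod_(j < n) phi j (z j)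
  = \prod_(j < n) \sum_(k < Q) tau j k * phi j k.
Proof.
rewrite bigA_distr_bigA /=; apply: eq_bigr => z _.
by rewrite /ptau -big_split.
Qed.

Definition rows1 (R : realType) (n Q : nat) (tau : 'I_n -> 'I_Q -> R) :=
  forall i, \sum_(q < Q) tau i q = 1.

Lemma E0 (R : realType) (n Q : nat) (tau : 'I_n -> 'I_Q -> R) :
  rows1 tau -> \sum_(z : config n Q) ptau tau z = 1.
Proof.
move=> h.
have := sum_ptau_prod tau (fun _ _ => 1).
rewrite (eq_bigr (fun z => ptau tau z)); last by move=> z _; rewrite big1 ?mulr1.
move=> ->; rewrite big1 // => j _.
by rewrite (eq_bigr (fun k => tau j k)) ?h // => k _; rewrite mulr1.
Qed.

Lemma E1 (R : realType) (n Q : nat) (tau : 'I_n -> 'I_Q -> R) (a : 'I_n)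
  (f : 'I_Q -> R) :
  rows1 tau -> \sum_(z : config n Q) ptau tau z * f (z a)
     = \sum_(k < Q) tau a k * f k.
Proof.
move=> h.
have := sum_ptau_prod tau (fun j k => if j == a then f k else 1).
rewrite (eq_bigr (fun z => ptau tau z * f (z a))); last first.
  move=> z _; rewrite (bigD1 a) //= eqxx big1 ?mulr1 // => j /negbTE ->//.
move=> ->; rewrite (bigD1 a) //= [X in _ * X]big1 ?mulr1.
  by apply: eq_bigr => k _; rewrite eqxx.
move=> j /negbTE hj; by rewrite (eq_bigr (fun k => tau j k)) ?h // => k _; rewrite hj mulr1.
Qed.

Lemma E2' (R : realType) (n Q : nat) (tau : 'I_n -> 'I_Q -> R) (a b : 'I_n)
  (u v : 'I_Q -> R) : a != b ->
  rows1 tau -> \sum_(z : config n Q) ptau tau z * (u (z a) * v (z b))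
     = (\sum_(k < Q) tau a k * u k) * (\sum_(k < Q) tau b k * v k).
Proof.
move=> hab h.
have := sum_ptau_prod tau (fun j k => if j == a then u k else if j == b then v k else 1).
rewrite (eq_bigr (fun z => ptau tau z * (u (z a) * v (z b)))); last first.
  move=> z _; rewrite (bigD1 a) //= eqxx (bigD1 b) 1?eq_sym //= eqxx.
  rewrite (negbTE hab) [X in _ * (_ * (_ * X))]big1 ?mulr1 // => j /andP[/negbTE -> /negbTE ->] //.
move=> ->; rewrite (bigD1 a) //= (bigD1 b) 1?eq_sym //= [X in _ * (_ * X)]big1 ?mulr1.
  have hba : (b == a) = false by rewrite eq_sym (negbTE hab).
  by rewrite !eqxx hba.
move=> j /andP[/negbTE hj1 /negbTE hj2].
by rewrite (eq_bigr (fun k => tau j k)) ?h // => k _; rewrite hj1 hj2 mulr1.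
Qed.

Lemma sum_delta (R : realType) (Q : nat) (g : 'I_Q -> R) (x : 'I_Q) :
  \sum_(q < Q) g q * (x == q)%:R = g x.
Proof.
rewrite (bigD1 x) //= eqxx mulr1 big1 ?addr0 // => q hq.
by rewrite eq_sym (negbTE hq) mulr0.
Qed.

Lemma sum_delta2 (R : realType) (Q : nat) (g : 'I_Q -> R) (x : 'I_Q) :
  \sum_(q < Q) g q * (q == x)%:R = g x.
Proof.
rewrite (bigD1 x) //= eqxx mulr1 big1 ?addr0 // => q hq.
by rewrite (negbTE hq) mulr0.
Qed.

Lemma E2 (R : realType) (n Q : nat) (tau : 'I_n -> 'I_Q -> R) (a b : 'I_n)
  (f : 'I_Q -> 'I_Q -> R) : a != b ->
  rows1 tau -> \sum_(z : config n Q) ptau tau z * f (z a) (z b)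
     = \sum_(q < Q) \sum_(l < Q) tau a q * tau b l * f q l.
Proof.
move=> hab h.
transitivity (\sum_(z : config n Q) \sum_(q < Q) \sum_(l < Q)
   f q l * (ptau tau z * ((z a == q)%:R * (z b == l)%:R))).
  apply: eq_bigr => z _.
  have -> : f (z a) (z b) = \sum_(q < Q) f q (z b) * (z a == q)%:R.
    by rewrite (sum_delta (fun q => f q (z b))).
  rewrite mulr_sumr; apply: eq_bigr => q _.
  have -> : f q (z b) = \sum_(l < Q) f q l * (z b == l)%:R.
    by rewrite (sum_delta (fun l => f q l)).
  rewrite mulr_suml mulr_sumr; apply: eq_bigr => l _.
  by ring.
rewrite exchange_big; apply: eq_bigr => q _; rewrite exchange_big; apply: eq_bigr => l _.
rewrite -mulr_sumr.
have := (@E2' R n Q tau a b (fun k => (k == q)%:R) (fun k => (k == l)%:R) hab h); rewrite /= => ->.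
rewrite !sum_delta2.
by rewrite mulrC.
Qed.

Lemma ln_prod (R : realType) (I : finType) (P : pred I) (F : I -> R) :
  (forall i, 0 < F i) -> ln (\prod_(i | P i) F i) = \sum_(i | P i) ln (F i).
Proof.
move=> hF.
suff : 0 < \prod_(i | P i) F i /\ ln (\prod_(i | P i) F i) = \sum_(i | P i) ln (F i) by case.
apply: (big_rec2 (fun x y => 0 < x /\ ln x = y)); first by rewrite ln1 ltr01.
move=> i x y _ [hx <-]; split; first by rewrite mulr_gt0.
by rewrite lnM ?posrE.
Qed.

Lemma ln_lik (R : realType) (n Q M : nat)
  (pi : 'I_Q -> R) (alpha : 'I_Q -> 'I_Q -> R -> R) (T : R)
  (t : 'I_M -> R) (src dst : 'I_M -> 'I_n)
  (hpi_pos : forall q, 0 < pi q)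
  (halpha_obs : forall m q l, 0 < alpha q l (t m)) (z : config n Q) :
  0 < lik pi alpha T t src dst z /\
  ln (lik pi alpha T t src dst z) =
   - (\sum_(i < n) \sum_(j < n | i != j) cumint alpha T (z i) (z j))
   + \sum_(m < M) ln (alpha (z (src m)) (z (dst m)) (t m))
   + \sum_(i < n) ln (pi (z i)).
Proof.
have h1 : 0 < \prod_(m < M) alpha (z (src m)) (z (dst m)) (t m).
  by apply: prodr_gt0 => m _.
have h2 : 0 < \prod_(i < n) pi (z i) by apply: prodr_gt0 => i _.
rewrite /lik; split; first by rewrite !mulr_gt0 // expR_gt0.
rewrite !lnM ?posrE ?mulr_gt0 ?expR_gt0 // expRK !ln_prod //.
Qed.

Definition Gf (R : realType) (n Q M : nat)
  (pi : 'I_Q -> R) (alpha : 'I_Q -> 'I_Q -> R -> R) (T : R)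
  (t : 'I_M -> R) (src dst : 'I_M -> 'I_n) (tau : 'I_n -> 'I_Q -> R) : R :=
  \sum_(j < n) \sum_(k < Q) tau j k * ln (tau j k)
  + \sum_(a < n) \sum_(b < n | a != b) \sum_(q < Q) \sum_(l < Q)
       tau a q * tau b l * cumint alpha T q l
  - \sum_(m < M) \sum_(q < Q) \sum_(l < Q)
       tau (src m) q * tau (dst m) l * ln (alpha q l (t m))
  - \sum_(a < n) \sum_(q < Q) tau a q * ln (pi q)
  + ln (\sum_(z : config n Q) lik pi alpha T t src dst z).

Lemma KL_eq (R : realType) (n Q M : nat)
  (pi : 'I_Q -> R) (alpha : 'I_Q -> 'I_Q -> R -> R) (T : R)
  (t : 'I_M -> R) (src dst : 'I_M -> 'I_n)
  (hpi_pos : forall q, 0 < pi q)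
  (halpha_obs : forall m q l, 0 < alpha q l (t m))
  (hdyad : forall m, src m != dst m)
  (tau : 'I_n -> 'I_Q -> R) (htau : in_T tau) :
  KL (ptau tau) (post pi alpha T t src dst) = Gf pi alpha T t src dst tau.
Proof.
case: htau => hge hsum.
have hr : rows1 tau by [].
set Z := \sum_(z : config n Q) lik pi alpha T t src dst z.
pose s1 (z : config n Q) := \sum_(j < n) ln (tau j (z j)).
pose s2 (z : config n Q) := \sum_(i < n) \sum_(j < n | i != j) cumint alpha T (z i) (z j).
pose s3 (z : config n Q) := \sum_(m < M) ln (alpha (z (src m)) (z (dst m)) (t m)).
pose s4 (z : config n Q) := \sum_(i < n) ln (pi (z i)).
have step : forall z : config n Q,
  (if ptau tau z == 0 then 0 else ptau tau z * ln (ptau tau z / post pi alpha T t src dst z))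
  = ptau tau z * s1 z + ptau tau z * s2 z - ptau tau z * s3 z - ptau tau z * s4 z
    + ln Z * ptau tau z.
  move=> z; case: eqP => [->|hp0]; first by ring.
  have hp : 0 < ptau tau z.
    by rewrite lt_def; apply/andP; split; [apply/eqP|apply: prodr_ge0 => j _].
  have [hl hll] := @ln_lik R n Q M pi alpha T t src dst hpi_pos halpha_obs z.
  have hZ : 0 < Z.
    apply: (lt_le_trans hl); rewrite /Z (bigD1 z) //= lerDl.
    by apply: sumr_ge0 => z' _; have [] := @ln_lik R n Q M pi alpha T t src dst hpi_pos halpha_obs z'; move/ltW.
  have hjpos : forall j, 0 < tau j (z j).
    move=> j; rewrite lt_def hge andbT; apply/eqP => h0; apply: hp0.
    by rewrite /ptau (bigD1 j) //= h0 mul0r.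
  rewrite /post ln_div ?posrE ?divr_gt0 // ln_div ?posrE // hll.
  rewrite /ptau ln_prod // -/(ptau tau z) /s1 /s2 /s3 /s4.
  ring.
rewrite /KL (eq_bigr _ (fun z _ => step z)).
rewrite !big_split /= !sumrN -mulr_sumr (E0 hr) mulr1.
have e1 : \sum_z ptau tau z * s1 z = \sum_(j < n) \sum_(k < Q) tau j k * ln (tau j k).
  rewrite (eq_bigr (fun z => \sum_(j < n) ptau tau z * ln (tau j (z j)))); last first.
    by move=> z _; rewrite /s1 mulr_sumr.
  rewrite exchange_big; apply: eq_bigr => j _.
  exact: (@E1 R n Q tau j (fun k => ln (tau j k)) hr).
have e2 : \sum_z ptau tau z * s2 z = \sum_(a < n) \sum_(b < n | a != b) \sum_(q < Q) \sum_(l < Q)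
       tau a q * tau b l * cumint alpha T q l.
  rewrite (eq_bigr (fun z => \sum_(a < n) \sum_(b < n | a != b) ptau tau z * cumint alpha T (z a) (z b))); last first.
    by move=> z _; rewrite /s2 mulr_sumr; apply: eq_bigr => a _; rewrite mulr_sumr.
  rewrite exchange_big; apply: eq_bigr => a _.
  rewrite exchange_big; apply: eq_bigr => b hab.
  exact: (@E2 R n Q tau a b (fun q l => cumint alpha T q l) hab hr).
have e3 : \sum_z ptau tau z * s3 z = \sum_(m < M) \sum_(q < Q) \sum_(l < Q)
       tau (src m) q * tau (dst m) l * ln (alpha q l (t m)).
  rewrite (eq_bigr (fun z => \sum_(m < M) ptau tau z * ln (alpha (z (src m)) (z (dst m)) (t m)))); last first.
    by move=> z _; rewrite /s3 mulr_sumr.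
  rewrite exchange_big; apply: eq_bigr => m _.
  exact: (@E2 R n Q tau (src m) (dst m) (fun q l => ln (alpha q l (t m))) (hdyad m) hr).
have e4 : \sum_z ptau tau z * s4 z = \sum_(a < n) \sum_(q < Q) tau a q * ln (pi q).
  rewrite (eq_bigr (fun z => \sum_(a < n) ptau tau z * ln (pi (z a)))); last first.
    by move=> z _; rewrite /s4 mulr_sumr.
  rewrite exchange_big; apply: eq_bigr => a _.
  exact: (@E1 R n Q tau a (fun q => ln (pi q)) hr).
by rewrite e1 e2 e3 e4.
Qed.

Definition upd (R : realType) (n Q : nat) (tau : 'I_n -> 'I_Q -> R) (i : 'I_n)
  (x : 'I_Q -> R) : 'I_n -> 'I_Q -> R :=
  fun j k => if j == i then x k else tau j k.

Lemma upd_i (R : realType) (n Q : nat) (tau : 'I_n -> 'I_Q -> R) i x k :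
  upd tau i x i k = x k.
Proof. by rewrite /upd eqxx. Qed.

Lemma upd_ne (R : realType) (n Q : nat) (tau : 'I_n -> 'I_Q -> R) i x j k :
  j != i -> upd tau i x j k = tau j k.
Proof. by move=> /negbTE h; rewrite /upd h. Qed.

Lemma P1_upd (R : realType) (n Q : nat) (tau : 'I_n -> 'I_Q -> R) i x :
  \sum_(j < n) \sum_(k < Q) upd tau i x j k * ln (upd tau i x j k)
  = \sum_(k < Q) x k * ln (x k)
    + \sum_(j < n | j != i) \sum_(k < Q) tau j k * ln (tau j k).
Proof.
rewrite (bigD1 i) //=; congr (_ + _).
  by apply: eq_bigr => k _; rewrite upd_i.
by apply: eq_bigr => j hj; apply: eq_bigr => k _; rewrite upd_ne.
Qed.

Lemma P4_upd (R : realType) (n Q : nat) (tau : 'I_n -> 'I_Q -> R) i x (c : 'I_Q -> R) :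
  \sum_(j < n) \sum_(k < Q) upd tau i x j k * c k
  = \sum_(k < Q) x k * c k
    + \sum_(j < n | j != i) \sum_(k < Q) tau j k * c k.
Proof.
rewrite (bigD1 i) //=; congr (_ + _).
  by apply: eq_bigr => k _; rewrite upd_i.
by apply: eq_bigr => j hj; apply: eq_bigr => k _; rewrite upd_ne.
Qed.

Lemma P2_upd (R : realType) (n Q : nat) (tau : 'I_n -> 'I_Q -> R) i x
  (A : 'I_Q -> 'I_Q -> R) :
  \sum_(a < n) \sum_(b < n | a != b) \sum_(q < Q) \sum_(l < Q)
       upd tau i x a q * upd tau i x b l * A q l
  = \sum_(k < Q) x k * (\sum_(l < Q) \sum_(j < n | j != i) tau j l * (A k l + A l k))
    + \sum_(a < n | a != i) \sum_(b < n | (a != b) && (b != i)) \sum_(q < Q) \sum_(l < Q)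
       tau a q * tau b l * A q l.
Proof.
rewrite (bigD1 i) //=.
have h1 : \sum_(b < n | i != b) \sum_(q < Q) \sum_(l < Q)
       upd tau i x i q * upd tau i x b l * A q l
   = \sum_(k < Q) \sum_(l < Q) \sum_(j < n | j != i) x k * tau j l * A k l.
  rewrite (eq_bigl (fun b => b != i)); last by move=> b; rewrite eq_sym.
  rewrite exchange_big; apply: eq_bigr => k _.
  rewrite exchange_big; apply: eq_bigr => l _.
  by apply: eq_bigr => j hj; rewrite upd_i upd_ne.
have h2 : \sum_(a < n | a != i) \sum_(b < n | a != b) \sum_(q < Q) \sum_(l < Q)
       upd tau i x a q * upd tau i x b l * A q l
   = \sum_(k < Q) \sum_(l < Q) \sum_(j < n | j != i) x k * tau j l * A l k
     + \sum_(a < n | a != i) \sum_(b < n | (a != b) && (b != i)) \sum_(q < Q) \sum_(l < Q)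
       tau a q * tau b l * A q l.
  have -> : \sum_(k < Q) \sum_(l < Q) \sum_(j < n | j != i) x k * tau j l * A l k
     = \sum_(j < n | j != i) \sum_(l < Q) \sum_(k < Q) tau j l * x k * A l k.
    under eq_bigr => k _ do rewrite exchange_big.
    rewrite exchange_big /=; apply: eq_bigr => j _.
    rewrite exchange_big /=; apply: eq_bigr => l _.
    by apply: eq_bigr => k _; rewrite (mulrC (x k)).
  rewrite -big_split /=; apply: eq_bigr => a ha.
  rewrite (bigD1 i) /=; last by [].
  congr (_ + _).
    by apply: eq_bigr => q _; apply: eq_bigr => l _; rewrite upd_i upd_ne.
  by apply: eq_bigr => b hb; apply: eq_bigr => q _; apply: eq_bigr => l _;
     rewrite !upd_ne //; case/andP: hb.
rewrite h1 h2 addrA; congr (_ + _).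
rewrite -big_split /=; apply: eq_bigr => k _.
rewrite -big_split mulr_sumr /=; apply: eq_bigr => l _.
rewrite -big_split mulr_sumr /=; apply: eq_bigr => j _.
by ring.
Qed.

Lemma P3_upd (R : realType) (n Q M : nat) (tau : 'I_n -> 'I_Q -> R) i x
  (src dst : 'I_M -> 'I_n) (hdyad : forall m, src m != dst m)
  (L : 'I_M -> 'I_Q -> 'I_Q -> R) :
  \sum_(m < M) \sum_(q < Q) \sum_(l < Q)
       upd tau i x (src m) q * upd tau i x (dst m) l * L m q l
  = \sum_(k < Q) x k * (\sum_(l < Q) \sum_(m < M)
        ((src m == i)%:R * tau (dst m) l * L m k l
         + (dst m == i)%:R * tau (src m) l * L m l k))
    + \sum_(m < M) ((src m != i) && (dst m != i))%:R *
        \sum_(q < Q) \sum_(l < Q) tau (src m) q * tau (dst m) l * L m q l.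
Proof.
have per : forall m, \sum_(q < Q) \sum_(l < Q)
       upd tau i x (src m) q * upd tau i x (dst m) l * L m q l
  = ((src m == i)%:R * \sum_(q < Q) \sum_(l < Q) x q * tau (dst m) l * L m q l
    + (dst m == i)%:R * \sum_(q < Q) \sum_(l < Q) tau (src m) q * x l * L m q l)
    + ((src m != i) && (dst m != i))%:R *
        \sum_(q < Q) \sum_(l < Q) tau (src m) q * tau (dst m) l * L m q l.
  move=> m; case: (eqVneq (src m) i) => hs.
    have hd : dst m != i by rewrite -hs eq_sym hdyad.
    rewrite (negbTE hd) /= mul1r !mul0r !addr0.
    by apply: eq_bigr => q _; apply: eq_bigr => l _; rewrite hs upd_i upd_ne.
  case: (eqVneq (dst m) i) => hd /=.
    rewrite mul1r !mul0r add0r addr0.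
    by apply: eq_bigr => q _; apply: eq_bigr => l _; rewrite hd upd_i upd_ne.
  rewrite mul1r !mul0r !add0r.
  by apply: eq_bigr => q _; apply: eq_bigr => l _; rewrite !upd_ne.
rewrite (eq_bigr _ (fun m _ => per m)) big_split /=; congr (_ + _).
have -> : \sum_(k < Q) x k * (\sum_(l < Q) \sum_(m < M)
        ((src m == i)%:R * tau (dst m) l * L m k l
         + (dst m == i)%:R * tau (src m) l * L m l k))
  = \sum_(k < Q) \sum_(l < Q) \sum_(m < M) x k * ((src m == i)%:R * tau (dst m) l * L m k l)
    + \sum_(k < Q) \sum_(l < Q) \sum_(m < M) x k * ((dst m == i)%:R * tau (src m) l * L m l k).
  rewrite -big_split /=; apply: eq_bigr => k _.
  rewrite mulr_sumr -big_split /=; apply: eq_bigr => l _.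
  rewrite mulr_sumr -big_split /=; apply: eq_bigr => m _.
  by rewrite mulrDr.
rewrite big_split /=; congr (_ + _).
  rewrite (eq_bigr (fun m => \sum_(q < Q) \sum_(l < Q)
     (src m == i)%:R * (x q * tau (dst m) l * L m q l))); last first.
    by move=> m _; rewrite mulr_sumr; apply: eq_bigr => q _; rewrite mulr_sumr.
  rewrite exchange_big; apply: eq_bigr => k _.
  rewrite exchange_big; apply: eq_bigr => l _.
  by apply: eq_bigr => m _; ring.
rewrite (eq_bigr (fun m => \sum_(q < Q) \sum_(l < Q)
   (dst m == i)%:R * (tau (src m) q * x l * L m q l))); last first.
  by move=> m _; rewrite mulr_sumr; apply: eq_bigr => q _; rewrite mulr_sumr.
under eq_bigr => m _ do rewrite exchange_big.
rewrite exchange_big; apply: eq_bigr => k _.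
rewrite exchange_big; apply: eq_bigr => l _.
by apply: eq_bigr => m _; ring.
Qed.

Lemma G_upd (R : realType) (n Q M : nat)
  (pi : 'I_Q -> R) (alpha : 'I_Q -> 'I_Q -> R -> R) (T : R)
  (t : 'I_M -> R) (src dst : 'I_M -> 'I_n)
  (hdyad : forall m, src m != dst m)
  (tau : 'I_n -> 'I_Q -> R) (i : 'I_n) (x y : 'I_Q -> R) :
  let c := fun k => ln (pi k) + Dfun alpha T t src dst tau i k in
  Gf pi alpha T t src dst (upd tau i x)
    - (\sum_(k < Q) x k * ln (x k) - \sum_(k < Q) x k * c k)
  = Gf pi alpha T t src dst (upd tau i y)
    - (\sum_(k < Q) y k * ln (y k) - \sum_(k < Q) y k * c k).
Proof.
move=> c.
have hc : forall z : 'I_Q -> R, \sum_(k < Q) z k * c k =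
   \sum_(k < Q) z k * ln (pi k)
   - \sum_(k < Q) z k * (\sum_(l < Q) \sum_(j < n | j != i) tau j l * (cumint alpha T k l + cumint alpha T l k))
   + \sum_(k < Q) z k * (\sum_(l < Q) \sum_(m < M)
        ((src m == i)%:R * tau (dst m) l * ln (alpha k l (t m))
         + (dst m == i)%:R * tau (src m) l * ln (alpha l k (t m)))).
  move=> z; rewrite -sumrB -big_split /=; apply: eq_bigr => k _.
  rewrite /c /Dfun; ring.
rewrite !hc /Gf !P1_upd !P2_upd !P4_upd.
rewrite !(P3_upd _ _ _ hdyad (fun m q l => ln (alpha q l (t m)))) /=.
ring.
Qed.

Unset Implicit Arguments.

Theorem proposition3 (R : realType) (n Q M : nat)
  (pi : 'I_Q -> R) (alpha : 'I_Q -> 'I_Q -> R -> R) (T : R)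
  (t : 'I_M -> R) (src dst : 'I_M -> 'I_n)
  (hpi_pos : forall q, 0 < pi q)
  (hpi_sum : \sum_(q < Q) pi q = 1)
  (hT : 0 < T)
  (halpha_ge0 : forall q l x, 0 <= alpha q l x)
  (halpha_int : forall q l,
     (@lebesgue_measure R).-integrable `[0, T] (EFin \o alpha q l))
  (halpha_obs : forall m q l, 0 < alpha q l (t m))
  (ht_range : forall m, 0 < t m < T)
  (ht_incr : forall m m' : 'I_M, (m < m')%N -> t m < t m')
  (hdyad : forall m, src m != dst m)
  (tauh : 'I_n -> 'I_Q -> R)
  (htauh : in_T tauh)
  (hmin : forall tau, in_T tau ->
     KL (ptau tauh) (post pi alpha T t src dst)
       <= KL (ptau tau) (post pi alpha T t src dst)) :
  forall (i : 'I_n) (q : 'I_Q),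
    tauh i q =
      pi q * expR (Dfun alpha T t src dst tauh i q)
      / \sum_(q' < Q) pi q' * expR (Dfun alpha T t src dst tauh i q').
Proof.
move=> i q.
have htauh' := htauh; case: htauh' => hge hsum.
set c := fun k => ln (pi k) + Dfun alpha T t src dst tauh i k.
have hec : forall k, expR (c k) = pi k * expR (Dfun alpha T t src dst tauh i k).
  by move=> k; rewrite /c expRD lnK // posrE.
set S := \sum_(k < Q) expR (c k).
have hS : 0 < S.
  rewrite /S (bigD1 q) //= ltr_wpDr ?expR_gt0 //.
  by apply: sumr_ge0 => k _; apply: ltW; apply: expR_gt0.
set g := fun k => expR (c k) / S.
have hg : forall k, 0 < g k by move=> k; rewrite divr_gt0 ?expR_gt0.
have hgsum : \sum_(k < Q) g k = 1 by rewrite -mulr_suml divff // gt_eqF.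
have lng : forall k, ln (g k) = c k - ln S.
  by move=> k; rewrite /g ln_div ?posrE ?expR_gt0 // expRK.
set h := tauh i.
have eqh : upd tauh i h = tauh.
  apply/funext => j; apply/funext => k; rewrite /upd.
  by case: eqP => [->|].
have hin' : in_T (upd tauh i g).
  split.
    by move=> j k; rewrite /upd; case: eqP => _; [apply: ltW|].
  move=> j; rewrite /upd; case: eqP => _ //.
have hle := hmin _ hin'.
rewrite !(@KL_eq R n Q M pi alpha T t src dst hpi_pos halpha_obs hdyad) // in hle.
have := @G_upd R n Q M pi alpha T t src dst hdyad tauh i h g.
rewrite eqh => hG0.
have hG : Gf pi alpha T t src dst tauh
    - (\sum_(k < Q) h k * ln (h k) - \sum_(k < Q) h k * c k)
  = Gf pi alpha T t src dst (upd tauh i g)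
    - (\sum_(k < Q) g k * ln (g k) - \sum_(k < Q) g k * c k) := hG0.
have key : \sum_(k < Q) h k * ln (h k) - \sum_(k < Q) h k * c k + ln S <= 0.
  have hgg : \sum_(k < Q) g k * ln (g k) = \sum_(k < Q) g k * c k - ln S.
    rewrite (eq_bigr (fun k => g k * c k - ln S * g k)); last first.
      by move=> k _; rewrite lng; ring.
    by rewrite sumrB -mulr_sumr hgsum mulr1.
  move: hle hG; rewrite hgg; lra.
have hsumh : \sum_(k < Q) h k = 1 by exact: hsum.
pose phi k := h k * (ln (h k) - ln (g k)) - h k + g k.
have phi_ge0 : forall k, 0 <= phi k.
  move=> k; rewrite /phi.
  have [h0|hp] := eqVneq (h k) 0.
    by rewrite h0 mul0r subrr add0r ltW.
  have hpos : 0 < h k by rewrite lt_def hp hge.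
  set y := g k / h k.
  have hy : 0 < y by rewrite divr_gt0.
  have -> : ln (g k) = ln (h k) + ln y.
    by rewrite -lnM ?posrE // /y mulrC divfK.
  have hgy : g k = h k * y by rewrite /y mulrC divfK.
  have := expR_ge1Dx (ln y); rewrite lnK ?posrE // => hle1.
  rewrite hgy.
  have -> : h k * (ln (h k) - (ln (h k) + ln y)) - h k + h k * y
     = h k * (y - 1 - ln y) by ring.
  by apply: mulr_ge0; [exact: ltW | lra].
have sumphi : \sum_(k < Q) phi k =
   \sum_(k < Q) h k * ln (h k) - \sum_(k < Q) h k * c k + ln S.
  rewrite (eq_bigr (fun k => (h k * ln (h k) - h k * c k) + (ln S * h k + (g k - h k)))); last first.
    by move=> k _; rewrite /phi lng; ring.
  by rewrite big_split /= sumrB big_split /= sumrB -mulr_sumr hsumh hgsum; ring.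
have phi0 : forall k, phi k = 0.
  move=> k; apply: (@psumr_eq0P R 'I_Q xpredT phi (fun j _ => phi_ge0 j)) => //.
  apply/eqP; rewrite eq_le; apply/andP; split; first by rewrite sumphi.
  by apply: sumr_ge0 => j _; exact: phi_ge0.
have hgq : h q = g q.
  have := phi0 q; rewrite /phi.
  have [h0|hp] := eqVneq (h q) 0.
    by rewrite h0 mul0r subrr add0r => /eqP; rewrite gt_eqF.
  have hpos : 0 < h q by rewrite lt_def hp hge.
  set y := g q / h q.
  have hy : 0 < y by rewrite divr_gt0.
  have -> : ln (g q) = ln (h q) + ln y.
    by rewrite -lnM ?posrE // /y mulrC divfK.
  have hgy : g q = h q * y by rewrite /y mulrC divfK.
  rewrite hgy.
  have -> : h q * (ln (h q) - (ln (h q) + ln y)) - h q + h q * y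
     = h q * (y - 1 - ln y) by ring.
  move/eqP; rewrite mulf_eq0 (negbTE hp) /= => /eqP hz.
  have [y1|yn1] := eqVneq y 1; first by rewrite y1 mulr1.
  have hln : ln y != 0 by rewrite ln_eq0.
  have := expR_gt1Dx hln; rewrite lnK ?posrE // => hlt.
  exfalso; move: hz hlt; lra.
rewrite hgq /g hec; congr (_ / _).
by rewrite /S; apply: eq_bigr => k _; rewrite hec.
Qed.
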